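(* Let $x<y$ be real numbers and let $\alpha\in(0,1)$. Let $f:[x,y]\to\mathbb{R}$ be a convex function and let $F:[x,y]\to\mathbb{R}$ be such that $F'=f$. Define $$S^1_\alpha f(x,y):=\frac{-\frac{\alpha}{1-\alpha}F(x)+\frac{2\alpha-1}{\alpha(1-\alpha)}F(\alpha x+(1-\alpha)y)+\frac{1-\alpha}{\alpha}F(y)}{y-x}.$$ Then $$f(\alpha x+(1-\alpha)y)\leq S^1_\alpha f(x,y)\leq\alpha f(x)+(1-\alpha)f(y).$$ *)

(* Defs.v *)
From Stdlib Require Import Reals Lra.
Open Scope R_scope.

Definition convex_on (x y : R) (f : R -> R) : Prop :=
  forall a b t, x <= a <= y -> x <= b <= y -> 0 <= t <= 1 ->
    f (t * a + (1 - t) * b) <= t * f a + (1 - t) * f b.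

(* F' = f on the closed interval [x,y]: at every point t of [x,y], the
   difference quotient of F, taken within [x,y] (one-sided at endpoints),
   tends to f t. *)
Definition deriv_on (x y : R) (F f : R -> R) : Prop :=
  forall t, x <= t <= y ->
    limit1_in (fun s => (F s - F t) / (s - t))
              (fun s => x <= s <= y /\ s <> t) (f t) t.

Definition S1 (alpha x y : R) (F : R -> R) : R :=
  (- (alpha / (1 - alpha)) * F x
   + (2 * alpha - 1) / (alpha * (1 - alpha)) * F (alpha * x + (1 - alpha) * y)
   + (1 - alpha) / alpha * F y) / (y - x).

(* Main.v *)
Require Import Defs.
From Stdlib Require Import Reals Lra.
From Coquelicot Require Import Coquelicot.
Open Scope R_scope.

Section S.
Variables (x y : R) (f F : R -> R).
Hypothesis Hxy : x < y.
Hypothesis HD : deriv_on x y F f.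

Definition clamp t := Rmax x (Rmin y t).
Definition Fc t := F (clamp t).

Lemma clamp_in t : x <= clamp t <= y.
Proof. unfold clamp, Rmax, Rmin; repeat destruct Rle_dec; lra. Qed.
Lemma clamp_id t : x <= t <= y -> clamp t = t.
Proof. unfold clamp, Rmax, Rmin; repeat destruct Rle_dec; lra. Qed.
Lemma clamp_lip s t : Rabs (clamp s - clamp t) <= Rabs (s - t).
Proof. unfold clamp, Rmax, Rmin; repeat destruct Rle_dec; split_Rabs; lra. Qed.

Lemma Fc_deriv t : x < t < y -> derivable_pt_lim Fc t (f t).
Proof.
  intros Ht eps Heps.
  destruct (HD t ltac:(lra) eps Heps) as [alp [Halp H]].
  assert (Hd : 0 < Rmin alp (Rmin (t - x) (y - t))).
  { repeat apply Rmin_pos; lra. }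
  exists (mkposreal _ Hd). intros h Hh0 Hh. simpl in Hh.
  assert (Hm1 := Rmin_l alp (Rmin (t - x) (y - t))).
  assert (Hm2 := Rmin_r alp (Rmin (t - x) (y - t))).
  assert (Hm3 := Rmin_l (t - x) (y - t)).
  assert (Hm4 := Rmin_r (t - x) (y - t)).
  assert (Hb : - Rmin alp (Rmin (t - x) (y - t)) < h < Rmin alp (Rmin (t - x) (y - t))).
  { split_Rabs; lra. }
  unfold Fc. rewrite !clamp_id by lra.
  specialize (H (t + h)). simpl in H. unfold R_dist in H.
  replace (t + h - t) with h in H by ring.
  apply H. split; [split; [lra|lra]|]. split_Rabs; lra.
Qed.

Lemma F_cont_within c : x <= c <= y -> forall eps, 0 < eps ->
  exists d, 0 < d /\ forall u, x <= u <= y -> Rabs (u - c) < d -> Rabs (F u - F c) < eps.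
Proof.
  intros Hc eps Heps.
  destruct (HD c Hc 1 ltac:(lra)) as [alp [Halp H]].
  assert (Hf : 0 < Rabs (f c) + 1) by (pose proof (Rabs_pos (f c)); lra).
  assert (Hd : 0 < Rmin alp (eps / (Rabs (f c) + 1))).
  { apply Rmin_pos; [lra|apply Rdiv_lt_0_compat; lra]. }
  exists (Rmin alp (eps / (Rabs (f c) + 1))). split; [exact Hd|].
  intros u Hu Huc.
  assert (Hm1 := Rmin_l alp (eps / (Rabs (f c) + 1))).
  assert (Hm2 := Rmin_r alp (eps / (Rabs (f c) + 1))).
  destruct (Req_dec u c) as [->|Hne].
  { unfold Rminus; rewrite Rplus_opp_r, Rabs_R0; lra. }
  specialize (H u). simpl in H. unfold R_dist in H.
  assert (Hq : Rabs ((F u - F c) / (u - c) - f c) < 1). { apply H. split; [split; assumption|]. simpl; unfold R_dist; lra. }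
  set (q := (F u - F c) / (u - c)) in Hq.
  assert (HFq : F u - F c = q * (u - c)).
  { unfold q; field; lra. }
  rewrite HFq, Rabs_mult.
  assert (Hq1 : Rabs q < Rabs (f c) + 1).
  { replace q with ((q - f c) + f c) by ring.
    pose proof (Rabs_triang (q - f c) (f c)); lra. }
  assert (Hepsd : (Rabs (f c) + 1) * (eps / (Rabs (f c) + 1)) = eps) by (field; lra).
  pose proof (Rabs_pos q). pose proof (Rabs_pos (u - c)).
  apply Rle_lt_trans with ((Rabs (f c) + 1) * Rabs (u - c)).
  - apply Rmult_le_compat_r; lra.
  - rewrite <- Hepsd. apply Rmult_lt_compat_l; lra.
Qed.

Lemma Fc_cont t : continuity_pt Fc t.
Proof.
  unfold continuity_pt, continue_in, limit1_in, limit_in.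
  intros eps Heps.
  destruct (F_cont_within (clamp t) (clamp_in t) eps Heps) as [d [Hd H]].
  exists d. split; [lra|]. intros s [_ Hs]. simpl in *. unfold R_dist in *.
  unfold Fc. apply H. apply clamp_in.
  pose proof (clamp_lip s t). lra.
Qed.

Lemma aff_cont z0 p u : continuity_pt (fun u => Fc (z0 + p*u)) u.
Proof.
  apply (continuity_pt_comp (fun u => z0 + p*u) Fc).
  - reg.
  - apply Fc_cont.
Qed.

Lemma aff_deriv z0 p u : x < z0 + p*u < y ->
  is_derive (fun u => Fc (z0 + p*u)) u (p * f (z0+p*u)).
Proof.
  intros Hu.
  assert (H1 : is_derive Fc (z0 + p*u) (f (z0+p*u))).
  { apply is_derive_Reals, Fc_deriv; lra. }
  assert (H2 : is_derive (fun u => z0 + p*u) u p).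
  { auto_derive; auto; ring. }
  exact (is_derive_comp Fc (fun u => z0 + p*u) u _ _ H1 H2).
Qed.

Lemma is_derive_lin3 (g1 g2 : R -> R) (A B C u d1 d2 : R) :
  is_derive g1 u d1 -> is_derive g2 u d2 ->
  is_derive (fun u => A * g1 u + B * g2 u + C * u) u (A * d1 + B * d2 + C).
Proof.
  intros H1 H2.
  assert (H3 : is_derive (fun u : R => C * u) u C).
  { auto_derive; auto; ring. }
  pose proof (is_derive_plus _ _ _ _ _ (is_derive_plus _ _ _ _ _ (is_derive_scal _ _ A _ H1) (is_derive_scal _ _ B _ H2)) H3) as H.
  exact H.
Qed.
Lemma cont_lin3 (g1 g2 : R -> R) (A B C u : R) :
  continuity_pt g1 u -> continuity_pt g2 u ->
  continuity_pt (fun u => A * g1 u + B * g2 u + C * u) u.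
Proof.
  intros H1 H2.
  change (continuity_pt (plus_fct (plus_fct (mult_real_fct A g1) (mult_real_fct B g2)) (mult_real_fct C id)) u).
  apply continuity_pt_plus; [apply continuity_pt_plus|];
    apply continuity_pt_scal; auto. apply derivable_continuous_pt, derivable_pt_id.
Qed.

Lemma sq_deriv u : is_derive (fun u => u * u) u (2 * u).
Proof. auto_derive; auto; ring. Qed.
Lemma sq_cont u : continuity_pt (fun u => u * u) u.
Proof. reg. Qed.

Hypothesis HC : convex_on x y f.

Lemma upper a b : x <= a -> a < b -> b <= y ->
  F b - F a <= (b - a) * (f a + f b) / 2.
Proof.
  intros Ha Hab Hb.
  set (B := - (b - a) * (f b - f a) / 2).
  set (C := - (b - a) * f a).
  set (K := fun u => 1 * Fc (a + (b - a) * u) + B * (u * u) + C * u).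
  set (df := fun u => 1 * ((b - a) * f (a + (b - a) * u)) + B * (2 * u) + C).
  destruct (MVT_gen K 0 1 df) as [c [Hc Heq]].
  - intros u Hu. unfold Rmin, Rmax in Hu; destruct Rle_dec; try lra.
    apply is_derive_lin3. apply aff_deriv. nra. apply sq_deriv.
  - intros u Hu. apply cont_lin3. apply aff_cont. apply sq_cont.
  - unfold Rmin, Rmax in Hc; destruct Rle_dec; try lra.
    unfold K, df, Fc in Heq.
    rewrite !clamp_id in Heq by nra.
    replace (a + (b - a) * 1) with b in Heq by ring.
    replace (a + (b - a) * 0) with a in Heq by ring.
    assert (Hcv := HC a b (1 - c) ltac:(lra) ltac:(lra) ltac:(lra)).
    replace ((1 - c) * a + (1 - (1 - c)) * b) with (a + (b - a) * c) in Hcv by ring.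
    unfold B, C in Heq.
    assert (Hp : (b - a) * f (a + (b - a) * c) <= (b - a) * ((1 - c) * f a + (1 - (1 - c)) * f b)).
    { apply Rmult_le_compat_l; lra. }
    nra.
Qed.

Lemma lower al z h : 0 < al < 1 -> 0 < h -> x = z - (1 - al) * h -> y = z + al * h ->
  - al^2 * F x + (1 - al)^2 * F y - (- al^2 + (1 - al)^2) * F z
  >= al * (1 - al) * h * f z.
Proof.
  intros Hal Hh Hx Hy.
  set (p := - (1 - al) * h). set (q := al * h).
  set (C := - (al * (1 - al) * h * f z)).
  set (K := fun u => (- al^2) * Fc (z + p * u) + (1 - al)^2 * Fc (z + q * u) + C * u).
  set (df := fun u => (- al^2) * (p * f (z + p * u)) + (1 - al)^2 * (q * f (z + q * u)) + C).
  assert (Hal2 : 0 < al * (1 - al) * h) by (apply Rmult_lt_0_compat; nra).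
  destruct (MVT_gen K 0 1 df) as [c [Hc Heq]].
  - intros u Hu. unfold Rmin, Rmax in Hu; destruct Rle_dec; try lra.
    assert (E1 : 0 < (1-al)*h*u < (1-al)*h) by (split; nra).
    assert (E2 : 0 < al*h*u < al*h) by (split; nra).
    apply is_derive_lin3; apply aff_deriv; unfold p, q; lra.
  - intros u Hu. apply cont_lin3; apply aff_cont.
  - unfold Rmin, Rmax in Hc; destruct Rle_dec; try lra.
    unfold K, df, Fc in Heq.
    assert (E1 : 0 <= (1-al)*h*c <= (1-al)*h) by (split; nra).
    assert (E2 : 0 <= al*h*c <= al*h) by (split; nra).
    rewrite !clamp_id in Heq by (unfold p, q; lra).
    replace (z + p * 1) with x in Heq by (unfold p; lra).
    replace (z + q * 1) with y in Heq by (unfold q; lra).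
    replace (z + p * 0) with z in Heq by ring.
    replace (z + q * 0) with z in Heq by ring.
    assert (Hcv := HC (z + p * c) (z + q * c) al ltac:(unfold p; lra) ltac:(unfold q; lra) ltac:(lra)).
    replace (al * (z + p * c) + (1 - al) * (z + q * c)) with z in Hcv by (unfold p, q; ring).
    assert (Hp : al * (1 - al) * h * f z <= al * (1 - al) * h * (al * f (z + p * c) + (1 - al) * f (z + q * c))).
    { apply Rmult_le_compat_l; lra. }
    unfold C, p, q in *. nra.
Qed.

End S.

Theorem proposition2 (x y alpha : R) (f F : R -> R) :
  x < y -> 0 < alpha < 1 ->
  convex_on x y f -> deriv_on x y F f ->
  f (alpha * x + (1 - alpha) * y) <= S1 alpha x y F /\
  S1 alpha x y F <= alpha * f x + (1 - alpha) * f y.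
Proof.
  intros Hxy Hal HC HD.
  set (z := alpha * x + (1 - alpha) * y).
  set (h := y - x).
  assert (Hh : 0 < h) by (unfold h; lra).
  assert (Hk : 0 < alpha * (1 - alpha) * h) by (apply Rmult_lt_0_compat; nra).
  assert (HS : S1 alpha x y F * (alpha * (1 - alpha) * h) =
     - alpha^2 * F x + (1 - alpha)^2 * F y - (- alpha^2 + (1 - alpha)^2) * F z).
  { unfold S1, z, h. field. split; [lra|]. split; lra. }
  assert (Hzx : alpha * h <= (1-alpha)*h + alpha * h) by nra.
  split.
  - assert (L := lower x y f F Hxy HD HC alpha z h Hal Hh
        ltac:(unfold z, h; ring) ltac:(unfold z, h; ring)).
    rewrite <- HS in L.
    apply Rmult_le_reg_r with (alpha * (1 - alpha) * h); lra.
  - assert (E1 : (1-alpha)*h > 0) by nra.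
    assert (E2 : alpha*h > 0) by nra.
    assert (U1 := upper x y f F Hxy HD HC x z ltac:(lra) ltac:(unfold z, h in *; lra) ltac:(unfold z, h in *; lra)).
    assert (U2 := upper x y f F Hxy HD HC z y ltac:(unfold z, h in *; lra) ltac:(unfold z, h in *; lra) ltac:(lra)).
    assert (Hcv := HC x y alpha ltac:(lra) ltac:(lra) ltac:(lra)).
    fold z in Hcv.
    replace (z - x) with ((1 - alpha) * h) in U1 by (unfold z, h; ring).
    replace (y - z) with (alpha * h) in U2 by (unfold z, h; ring).
    apply Rmult_le_reg_r with (alpha * (1 - alpha) * h); [lra|].
    rewrite HS.
    assert (V1 : alpha^2 * (F z - F x) <= alpha^2 * ((1 - alpha) * h * (f x + f z) / 2)).
    { apply Rmult_le_compat_l; nra. }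
    assert (V2 : (1-alpha)^2 * (F y - F z) <= (1-alpha)^2 * (alpha * h * (f z + f y) / 2)).
    { apply Rmult_le_compat_l; nra. }
    assert (V3 : alpha * (1 - alpha) * h * f z <= alpha * (1 - alpha) * h * (alpha * f x + (1 - alpha) * f y)).
    { apply Rmult_le_compat_l; lra. }
    nra.
Qed.
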